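(* Let $K=K_0\supset K_1\supset K_2\supset\cdots$ be a module with a decreasing filtration by submodules (with the convention $K_q=K_0$ for $q<0$), and for each integer $r\ge -1$ let $\partial_r:K\to K$ be a linear map with $\partial_r(K_p)\subset K_p$ for all $p$, $\partial_{-1}=0$, and $\partial_r\circ\partial_s=0$ for all $r,s\ge -1$. For $r\ge -1$ and integers $p$ put $Z^r_p=\{x\in K_p:\ \partial_r x\in K_{p+r}\}$. Assume the following property: for all $r\ge 0$ and all $p$, if $x\in Z^r_p$ or $x\in Z^{r-1}_p$, then $\partial_r x-\partial_{r-1}x\in Z^{r-1}_{p+r}$. For $r\ge 0$ define $$E^r_p=Z^r_p\big/\bigl(\partial_{r-1}Z^{r-1}_{p-r+1}+Z^{r-1}_{p+1}\bigr),\qquad E^r_\cdot=\bigoplus_p E^r_p .$$ Then for every $r\ge 0$ there is a differential $d^r$ on the graded module $E^r_\cdot$, induced by $\partial_r$ and mapping $E^r_p$ to $E^r_{p+r}$, such that the cohomology $H(E^r_\cdot)$ (in degree $p$: $\ker d^r_p/\operatorname{im} d^r_{p-r}$) is canonically isomorphic to $E^{r+1}_\cdot$ (degree by degree, $H^p(E^r_\cdot)\cong E^{r+1}_p$).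
   Context: The maps $\partial_r$ play the role of varying boundary operators converging in the filtration topology; the denominators in the definition of $E^r_p$ are submodules of $Z^r_p$ under the stated assumptions. *)

(* Defs.v *)
From HB Require Import structures.
From mathcomp Require Import all_boot all_order all_algebra.
Set Implicit Arguments. Unset Strict Implicit. Unset Printing Implicit Defensive.
Import Order.TTheory GRing.Theory Num.Theory.
Local Open Scope ring_scope.

(* Quotients are handled at the level of representatives:
   E^r_p = Zr r p / Bden r p.                                              *)
Section SpecSeq.
Variables (R : pzRingType) (K : lmodType R).
Variables (F : int -> {pred K}) (d : int -> {linear K -> K}).

Definition Zr (r p : int) : pred K :=
  [pred x | (x \in F p) && (d r x \in F (p + r))].

Definition in_sum (A B : K -> Prop) (x : K) : Prop :=
  exists a b, A a /\ B b /\ x = a + b.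

Definition in_img (f : K -> K) (A : pred K) (x : K) : Prop :=
  exists y, y \in A /\ x = f y.

Definition Bden (r p : int) (x : K) : Prop :=
  in_sum (in_img (d (r - 1)) (Zr (r - 1) (p - r + 1)))
         (fun z => z \in Zr (r - 1) (p + 1)) x.

(* representatives of ker d^r_p : E^r_p -> E^r_{p+r} *)
Definition Kerd (r p : int) (x : K) : Prop :=
  x \in Zr r p /\ Bden r (p + r) (d r x).

(* representatives of (im d^r_{p-r}) in E^r_p, lifted to Z^r_p:
   d_r Z^r_{p-r} + denominator of E^r_p *)
Definition Imd (r p : int) (x : K) : Prop :=
  in_sum (in_img (d r) (Zr r (p - r))) (Bden r p) x.

End SpecSeq.

(* Main.v *)
Require Import Defs.
From HB Require Import structures.
From mathcomp Require Import all_boot all_order all_algebra.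
Import Order.TTheory GRing.Theory Num.Theory.
Local Open Scope ring_scope.
From mathcomp Require Import zify.

Theorem mainTheorem4 (R : pzRingType) (K : lmodType R)
  (F : int -> {pred K}) (d : int -> {linear K -> K})
  (hFsub : forall p, submod_closed (F p))
  (hFdec : forall p, {subset F (p + 1) <= F p})
  (hFneg : forall p, p <= 0 -> forall x, x \in F p)
  (hdF : forall r p x, -1 <= r -> x \in F p -> d r x \in F p)
  (hdm1 : forall x, d (-1) x = 0)
  (hdd : forall r s x, -1 <= r -> -1 <= s -> d r (d s x) = 0)
  (hprop : forall (r : nat) (p : int) (x : K),
     (x \in Zr F d r%:Z p \/ x \in Zr F d (r%:Z - 1) p) ->
     d r%:Z x - d (r%:Z - 1) x \in Zr F d (r%:Z - 1) (p + r%:Z)) :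
  forall (r : nat) (p : int),
    (* d^r : E^r_p -> E^r_{p+r} induced by d_r is well defined *)
    (forall x, x \in Zr F d r%:Z p -> d r%:Z x \in Zr F d r%:Z (p + r%:Z)) /\
    (forall x, Bden F d r%:Z p x -> Bden F d r%:Z (p + r%:Z) (d r%:Z x)) /\
    (* d^r o d^r = 0 *)
    (forall x, x \in Zr F d r%:Z p ->
       Bden F d r%:Z (p + r%:Z + r%:Z) (d r%:Z (d r%:Z x))) /\
    (* the canonical map E^{r+1}_p -> H^p(E^r), [x] |-> [x], is well defined *)
    (forall x, x \in Zr F d (r.+1)%:Z p -> Kerd F d r%:Z p x) /\
    (forall x, Bden F d (r.+1)%:Z p x -> Imd F d r%:Z p x) /\
    (* ... injective ... *)
    (forall x, x \in Zr F d (r.+1)%:Z p -> Imd F d r%:Z p x ->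
       Bden F d (r.+1)%:Z p x) /\
    (* ... and surjective *)
    (forall x, Kerd F d r%:Z p x ->
       exists y, y \in Zr F d (r.+1)%:Z p /\ Imd F d r%:Z p (x - y)).
Proof.
move=> r p.
have F0 q : 0 \in F q by case: (hFsub q).
have FD q u v : u \in F q -> v \in F q -> u + v \in F q.
  by move=> hu hv; case: (hFsub q) => _ L; have := L 1 u v hu hv; rewrite scale1r.
have FN q u : u \in F q -> - u \in F q.
  by move=> hu; case: (hFsub q) => _ L; have := L (-1) u 0 hu (F0 q); rewrite scaleN1r addr0.
have FB q u v : u \in F q -> v \in F q -> u - v \in F q.
  by move=> hu hv; apply: FD => //; apply: FN.
have Fe q q' x : q = q' -> x \in F q -> x \in F q' by move=> ->.
have ZrP r' q x : x \in Zr F d r' q = (x \in F q) && (d r' x \in F (q + r')) by [].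
have hr : -1 <= r%:Z by lia.
have hr1 : -1 <= r%:Z - 1 by lia.
have hr2 : -1 <= (r.+1)%:Z by lia.
have Zm1 : (r.+1)%:Z - 1 = r%:Z by lia.
have Z0 r' q : 0 \in Zr F d r' q by rewrite ZrP linear0 F0 F0.
have key x : x \in Zr F d (r.+1)%:Z p -> (x \in F p) && (d r%:Z x \in F (p + r%:Z + 1)).
  move=> hx; have := hprop r.+1 p x (or_introl hx).
  rewrite Zm1 ZrP => /andP[h1 _].
  move: hx; rewrite ZrP => /andP[-> h2] /=.
  have -> : d r%:Z x = d (r.+1)%:Z x - (d (r.+1)%:Z x - d r%:Z x) by rewrite opprB addrC subrK.
  apply: FB; first by apply: Fe h2; lia.
  by apply: Fe h1; lia.
have Zre r' q q' x : q = q' -> x \in Zr F d r' q -> x \in Zr F d r' q' by move=> ->.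
have Fdec q q' x : q' = q + 1 -> x \in F q' -> x \in F q by move=> ->; apply: hFdec.
have low q b : b \in Zr F d (r%:Z - 1) q -> d r%:Z b \in F (q + r%:Z - 1)
   /\ d r%:Z b - d (r%:Z - 1) b \in F (q + r%:Z).
  move=> hb; have := hprop r q b (or_intror hb); rewrite ZrP => /andP[h1 _].
  move: hb; rewrite ZrP => /andP[_ h2].
  split; last by [].
  have -> : d r%:Z b = d (r%:Z - 1) b + (d r%:Z b - d (r%:Z - 1) b) by rewrite addrC subrK.
  apply: FD; first by apply: Fe h2; lia.
  by apply: Fdec h1; lia.
split.
  by move=> x; rewrite !ZrP => /andP[_ h]; rewrite h hdd // F0.
split.
  move=> x [a [b [[y [hy ->]] [hb ->]]]].
  rewrite linearD hdd // add0r.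
  exists (d (r%:Z - 1) b), (d r%:Z b - d (r%:Z - 1) b).
  split; first by exists b; split => //; apply: Zre hb; lia.
  split; last by rewrite addrC subrK.
  have := hprop r (p + 1) b (or_intror hb). by apply: Zre; lia.
split.
  move=> x _; rewrite hdd //.
  exists 0, 0; split; first by exists 0; split; [apply: Z0 | rewrite linear0].
  by split; [apply: Z0 | rewrite addr0].
split.
  move=> x hx; have /andP[hxp hdx] := key x hx.
  split; first by rewrite ZrP hxp; apply: hFdec (p + r%:Z) _ hdx.
  exists 0, (d r%:Z x).
  split; first by exists 0; split; [apply: Z0 | rewrite linear0].
  split; last by rewrite add0r.
  rewrite ZrP hdd // F0 andbT; apply: Fe hdx; lia.
split.
  rewrite /Bden Zm1.
  move=> x [a [b [[y [hy ->]] [hb ->]]]].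
  exists (d r%:Z y), b; split; first by exists y; split => //; apply: Zre hy; lia.
  split => //.
  exists 0, b; split; first by exists 0; split; [apply: Z0 | rewrite linear0].
  split; last by rewrite add0r.
  have := hprop r (p + 1) b (or_introl hb); rewrite ZrP => /andP[h1 _].
  move: hb; rewrite !ZrP => /andP[-> h2] /=.
  have -> : d (r%:Z - 1) b = d r%:Z b - (d r%:Z b - d (r%:Z - 1) b) by rewrite subKr.
  apply: FB; first by apply: Fdec h2; lia.
  by apply: Fdec h1; lia.
split.
  move=> x hx [u [v [[a [ha ->]] [[w [c [[b [hb ->]] [hc ->]]]] Ex]]]].
  have /andP[_ hdx] := key _ hx. subst x.
  have [hdb hdiff] := low _ _ hb.
  rewrite /Bden Zm1.
  exists (d r%:Z (a + b)), (c - (d r%:Z b - d (r%:Z - 1) b)).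
  split.
    exists (a + b); split; last by [].
    apply: (Zre _ (p - r%:Z)); first lia.
    move: ha hb; rewrite !ZrP => /andP[ha1 ha2] /andP[hb1 _].
    rewrite linearD; apply/andP; split; first by apply: FD => //; apply: Fdec hb1; lia.
    apply: FD => //; by apply: Fe hdb; lia.
  split.
    rewrite ZrP; apply/andP; split.
      move: hc; rewrite ZrP => /andP[hc1 _]; apply: FB => //; apply: Fe hdiff; lia.
    have -> : c - (d r%:Z b - d (r%:Z - 1) b) =
      d r%:Z a + (d (r%:Z - 1) b + c) - (d r%:Z a + d r%:Z b).
      by rewrite [- (_ + d r%:Z b)]opprD addrACA subrr add0r opprB addrCA addrA.
    rewrite -linearD linearB hdd // subr0; idtac.
    apply: Fe hdx; lia.
  rewrite linearD -addrA; congr (_ + _); by rewrite addrCA subKr addrC.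
move=> x [hx [u [a [[y [hy ->]] [ha hdx]]]]].
have hy' : y \in Zr F d (r%:Z - 1) (p + 1) by apply: Zre hy; lia.
have [_ hdiff] := low _ _ hy'.
exists (x - y); split; last first.
  rewrite subKr.
  exists 0, y; split; first by exists 0; split; [apply: Z0 | rewrite linear0].
  split; last by rewrite add0r.
  exists 0, y; split; first by exists 0; split; [apply: Z0 | rewrite linear0].
  by split; last rewrite add0r.
move: hx ha hy'; rewrite !ZrP => /andP[hx1 _] /andP[ha1 _] /andP[hy1 _].
have hw1 : x - y \in F p by apply: FB => //; apply: Fdec hy1; lia.
have hw2 : d r%:Z (x - y) \in F (p + r%:Z + 1).
  rewrite linearB hdx.
  have -> : d (r%:Z - 1) y + a - d r%:Z y = a - (d r%:Z y - d (r%:Z - 1) y)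
    by rewrite opprB addrA (addrC (d (r%:Z - 1) y)).
  by apply: FB; [apply: Fe ha1 | apply: Fe hdiff]; lia.
have hwZ : x - y \in Zr F d ((r.+1)%:Z - 1) p.
  by rewrite Zm1 ZrP hw1; apply: Fdec hw2; lia.
have := hprop r.+1 p (x - y) (or_intror hwZ); rewrite Zm1 ZrP => /andP[h1 _].
rewrite hw1 /=.
have -> : d (r.+1)%:Z (x - y) = (d (r.+1)%:Z (x - y) - d r%:Z (x - y)) + d r%:Z (x - y)
  by rewrite subrK.
by apply: FD; apply: Fe; [| exact: h1 | | exact: hw2]; lia.
Qed.
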